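(* Let $B$ be a C*-algebra and $A\subseteq B$ a closed *-subalgebra satisfying the ideal intersection property and axiom (inv) relative to $B$. Then for every closed two-sided ideal $J$ of $B$: (i) $\mathrm{Ann}_B(J\cap A)=\mathrm{Ann}_B(J)$, and (ii) $\mathrm{Ann}_A(J\cap A)=\mathrm{Ann}_B(J)\cap A$.
   Context: For a C*-algebra $C$ and $S\subseteq C$, $[S]$ is the closed linear span, and $S$ is $C$-invariant if $[SC]=[CS]$. For $C$-invariant $S$, $\{x\in C: xs=0\ \forall s\in S\}=\{x\in C: sx=0\ \forall s\in S\}$, denoted $\mathrm{Ann}_C(S)$. $A$ satisfies the ideal intersection property relative to $B$ if $J\cap A\neq\{0\}$ for every nonzero closed two-sided ideal $J$ of $B$. $A$ satisfies axiom (inv) relative to $B$ if $J\cap A$ is $B$-invariant for every closed two-sided ideal $J$ of $B$. *)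

(* Defs.v *)
From HB Require Import structures.
From mathcomp Require Import all_boot all_order all_algebra.
From mathcomp Require Import all_classical all_reals all_analysis.
From mathcomp Require Import complex.
Set Implicit Arguments. Unset Strict Implicit. Unset Printing Implicit Defensive.
Import Order.TTheory GRing.Theory Num.Theory.
Import numFieldNormedType.Exports.
Local Open Scope classical_set_scope.
Local Open Scope ring_scope.

Definition is_Cstar_algebra (R : realType) (B : completeNormedModType R[i])
    (mul : B -> B -> B) (star : B -> B) : Prop :=
  [/\ (forall (a : R[i]) (x y z : B), mul (a *: x + y) z = a *: mul x z + mul y z),
      (forall (a : R[i]) (x y z : B), mul x (a *: y + z) = a *: mul x y + mul x z),
      (forall x y z : B, mul x (mul y z) = mul (mul x y) z) &
      (forall x y : B, `|mul x y| <= `|x| * `|y|)] /\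
  [/\ (forall x y : B, star (x + y) = star x + star y),
      (forall (a : R[i]) (x : B), star (a *: x) = a^* *: star x),
      (forall x : B, star (star x) = x),
      (forall x y : B, star (mul x y) = mul (star y) (star x)) &
      (forall x : B, `|mul (star x) x| = `|x| ^+ 2)].

Section Defs.
Variables (R : realType) (B : completeNormedModType R[i]).
Variables (mul : B -> B -> B) (star : B -> B).

Definition lin_span (S : set B) : set B :=
  [set x | exists (n : nat) (c : 'I_n -> R[i]) (s : 'I_n -> B),
      (forall i, S (s i)) /\ x = \sum_(i < n) c i *: s i].

Definition clspan (S : set B) : set B := closure (lin_span S).

Definition prodset (S T : set B) : set B :=
  [set x | exists s t, S s /\ T t /\ x = mul s t].

Definition invariant (C S : set B) : Prop :=
  clspan (prodset S C) = clspan (prodset C S).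

Definition Ann (C S : set B) : set B :=
  [set x | C x /\ forall s, S s -> mul x s = 0].

Definition closed_ideal (J : set B) : Prop :=
  [/\ J 0, (forall x y, J x -> J y -> J (x + y)),
      (forall (a : R[i]) x, J x -> J (a *: x)),
      (forall x y, J y -> J (mul x y) /\ J (mul y x)) & closed J].

Definition closed_star_subalgebra (A : set B) : Prop :=
  [/\ A 0, (forall x y, A x -> A y -> A (x + y)),
      (forall (a : R[i]) x, A x -> A (a *: x)),
      (forall x y, A x -> A y -> A (mul x y)) &
      (forall x, A x -> A (star x))] /\ closed A.

Definition ideal_intersection_property (A : set B) : Prop :=
  forall J, closed_ideal J -> J <> [set 0] -> J `&` A <> [set 0].

Definition axiom_inv (A : set B) : Prop :=
  forall J, closed_ideal J -> invariant setT (J `&` A).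

End Defs.

(* Main.v *)
Require Import Defs.
From HB Require Import structures.
From mathcomp Require Import all_boot all_order all_algebra.
From mathcomp Require Import all_classical all_reals all_analysis.
From mathcomp Require Import complex.
Import numFieldNormedType.Exports.
Local Open Scope classical_set_scope.
Local Open Scope ring_scope.
Import Order.TTheory GRing.Theory Num.Theory.

Lemma kernel_closed (R : realType) (B : completeNormedModType R[i])
  (f : B -> B) (C : R[i]) : 0 <= C ->
  (forall u v, `|f u - f v| <= C * `|u - v|) ->
  closed [set u | f u = 0].
Proof.
move=> C0 Hf w Hw /=.
apply/normr0_eq0; apply/eqP; rewrite eq_le normr_ge0 andbT.
apply/unstable.ler_gtP => z z0.
have e0 : 0 < z / (C + 1) by rewrite divr_gt0 // ltr_wpDl.
have [s [/= fs0 bs]] := Hw _ (nbhsx_ballx w _ e0).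
move: bs; rewrite -ball_normE /= => bs.
have -> : f w = f w - f s by rewrite fs0 subr0.
apply: (le_trans (Hf w s)).
apply: (@le_trans _ _ (C * (z / (C + 1)))).
  exact: (ler_wpM2l C0 (ltW bs)).
rewrite -[leRHS](@mulfK _ (C + 1)); last by rewrite gt_eqF // ltr_wpDl.
rewrite mulrAC [leRHS]mulrC.
have h : C <= C + 1 by rewrite lerDl.
exact: (ler_wpM2r (ltW e0) h).
Qed.

Theorem corollary3p4 (R : realType) (B : completeNormedModType R[i])
    (mul : B -> B -> B) (star : B -> B) (A : set B) :
  is_Cstar_algebra mul star ->
  closed_star_subalgebra mul star A ->
  ideal_intersection_property mul A ->
  axiom_inv mul A ->
  forall J : set B, closed_ideal mul J ->
    Ann mul setT (J `&` A) = Ann mul setT J /\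
    Ann mul A (J `&` A) = Ann mul setT J `&` A.
Proof.
move=> [[mulDl mulDr mulA mulN] [stD stZ stK stM stC]]
  [[A0 AD AZ AM Ast] Acl] IIP INV J [J0 JD JZ JM Jcl].
have mul0r x : mul 0 x = 0.
  have h := mulDl 1 0 0 x; rewrite !scale1r addr0 in h.
  by apply: (addrI (mul 0 x)); rewrite addr0 -h.
have mulr0 x : mul x 0 = 0.
  have h := mulDr 1 x 0 0; rewrite !scale1r addr0 in h.
  by apply: (addrI (mul x 0)); rewrite addr0 -h.
have mulBl u v s : mul u s - mul v s = mul (u - v) s.
  have h := mulDl (-1) v u s; rewrite !scaleN1r in h.
  by rewrite [u - v]addrC h addrC.
have mulBr y u v : mul y u - mul y v = mul y (u - v).
  have h := mulDr (-1) y v u; rewrite !scaleN1r in h.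
  by rewrite [u - v]addrC h addrC.
have mulDl' x y z : mul (x + y) z = mul x z + mul y z.
  by have := mulDl 1 x y z; rewrite !scale1r.
have mulZl a x z : mul (a *: x) z = a *: mul x z.
  by have := mulDl a x 0 z; rewrite !addr0 mul0r addr0.
have kill_span y S : (forall s, S s -> mul y s = 0) ->
    forall w, clspan S w -> mul y w = 0.
  move=> HS w Hw.
  have Kcl : closed [set u | mul y u = 0].
    apply: (@kernel_closed R B (mul y) `|y|) => // u v.
    by rewrite mulBr mulN.
  apply: Kcl; apply: (closureS _ Hw) => x [n [c [s [Hs ->]]]] /=.
  elim: n c s Hs => [|n IH] c s Hs; first by rewrite big_ord0 mulr0.
  rewrite big_ord_recr /= addrC mulDr HS // scaler0 add0r.
  by apply: IH => i.
set L := [set y | forall s, (J `&` A) s -> mul y s = 0].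
have Lcl : closed L.
  move=> w Hw s Hs.
  have Kcl : closed [set u | mul u s = 0].
    apply: (@kernel_closed R B (fun u => mul u s) `|s|) => // u v.
    by rewrite mulBl (le_trans (mulN _ _)) // mulrC.
  by apply: Kcl; apply: (closureS _ Hw) => u /= Hu; exact: Hu.
have LR y b : L y -> L (mul y b).
  move=> Ly s Hs; rewrite -mulA.
  apply: (kill_span y (prodset mul (J `&` A) setT)).
    by move=> _ [s' [b' [Hs' [_ ->]]]]; rewrite mulA Ly // mul0r.
  rewrite /invariant in INV; rewrite (INV J) //.
  apply: subset_closure; exists 1%N, (fun=> 1), (fun=> mul b s); split => //.
    by move=> _; exists b, s.
  by rewrite big_ord1 scale1r.
have LL y b : L y -> L (mul b y).
  by move=> Ly s Hs; rewrite -mulA Ly // mulr0.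
set J' := J `&` L.
have HJ' : closed_ideal mul J'.
  split.
  - by split => // s _; rewrite mul0r.
  - move=> x y [Jx Lx] [Jy Ly]; split; first exact: JD.
    by move=> s Hs; rewrite mulDl' Lx // Ly // addr0.
  - move=> a x [Jx Lx]; split; first exact: JZ.
    by move=> s Hs; rewrite mulZl Lx // scaler0.
  - move=> x y [Jy Ly]; have [Jxy Jyx] := JM x y Jy.
    by split; split => //; [exact: LL | exact: LR].
  - exact: closedI.
have J'A : J' `&` A = [set 0].
  apply/seteqP; split => z; last first.
    by move=> /= ->; split; [split => // s _; rewrite mul0r|].
  move=> [[Jz Lz] Az] /=.
  set w := mul (star z) z.
  have Jw : J w by have [] := JM (star z) z Jz.
  have Aw : A w by apply: AM => //; exact: Ast.
  have zw : mul z w = 0 by apply: Lz.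
  have sw : star w = w by rewrite /w stM stK.
  have ww : mul w w = 0 by rewrite {1}/w -mulA zw mulr0.
  have : `|w| ^+ 2 = 0 by rewrite -stC sw ww normr0.
  move/eqP; rewrite expf_eq0 /= normr_eq0 => /eqP w0.
  have : `|z| ^+ 2 = 0 by rewrite -stC -/w w0 normr0.
  by move/eqP; rewrite expf_eq0 /= normr_eq0 => /eqP.
have J'0 : J' = [set 0].
  apply: contrapT => /(IIP _ HJ'); by rewrite J'A.
have part1 : Ann mul setT (J `&` A) = Ann mul setT J.
  apply/seteqP; split => x [_ Hx]; split => // j Hj.
    have [Jxj _] := JM x j Hj.
    have : J' (mul x j) by split => //; exact: LR.
    by rewrite J'0.
  by apply: Hx; case: Hj.
split => //.
rewrite -part1; apply/seteqP; split.
  by move=> x [Ax Hx]; split.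
by move=> x [[_ Hx] Ax]; split.
Qed.
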